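(* Let $L\ge2$, $D\ge 1$ be integers and for $k\in\mathbb{R}$ let \[ \operatorname{ELB}(k;L,D)=\log\left(L-1+\exp\left(2D^{k-\frac12}\right)\right)-\frac{2D^{k-\frac12}\exp\left(2D^{k-\frac12}\right)}{L-1+\exp\left(2D^{k-\frac12}\right)}. \] Then $\operatorname{ELB}(k;L,D)$ is a monotonically decreasing function of $k$, and it is bounded between $0$ and $\log L$.
   Context: $\log$ is the natural logarithm. (The proof treats $D>1$ implicitly so that $D^{k-1/2}$ is increasing in $k$.) *)

(* Defs.v *)
From Stdlib Require Import Reals.
Open Scope R_scope.

Definition ELB (L D : nat) (k : R) : R :=
  let t := 2 * Rpower (INR D) (k - 1/2) in
  ln (INR L - 1 + exp t) - t * exp t / (INR L - 1 + exp t).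

(* Main.v *)
Require Import Defs.
From Stdlib Require Import Reals Lra.
From Coquelicot Require Import Coquelicot.
Open Scope R_scope.

Definition gg (a t : R) := ln (a + exp t) - t * exp t / (a + exp t).

Lemma gg_der (a c : R) (ha : 1 <= a) :
  derivable_pt_lim (gg a) c (- (c * a * exp c) / (a + exp c) ^ 2).
Proof.
  apply is_derive_Reals. unfold gg.
  assert (He := exp_pos c).
  auto_derive.
  - lra.
  - field. lra.
Qed.

Lemma gg_decr (a x y : R) (ha : 1 <= a) : 0 <= x -> x < y -> gg a y < gg a x.
Proof.
  intros hx hxy.
  destruct (MVT_cor2 (gg a) (fun c => - (c * a * exp c) / (a + exp c) ^ 2) x y hxy)
    as [c [Hc Hcr]].
  { intros c _. apply gg_der; lra. }
  assert (He := exp_pos c).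
  assert (0 < (c * a * exp c) / (a + exp c) ^ 2).
  { apply Rdiv_lt_0_compat. apply Rmult_lt_0_compat; [apply Rmult_lt_0_compat|]; lra.
    apply pow_lt; lra. }
  assert (gg a y - gg a x < 0).
  { rewrite Hc. unfold Rdiv in *. rewrite Ropp_mult_distr_l_reverse.
    rewrite <- Ropp_mult_distr_l. apply Ropp_lt_gt_0_contravar in H.
    unfold Rdiv. nra. }
  lra.
Qed.

Theorem mainTheorem3 (L D : nat) (hL : (2 <= L)%nat) (hD : (1 <= D)%nat) :
  (forall k1 k2 : R, k1 <= k2 -> ELB L D k2 <= ELB L D k1) /\
  (forall k : R, 0 <= ELB L D k <= ln (INR L)).
Proof.
  assert (HL : 2 <= INR L) by (apply le_INR in hL; simpl in hL; lra).
  assert (HD : 1 <= INR D) by (apply le_INR in hD; simpl in hD; lra).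
  set (a := INR L - 1).
  assert (ha : 1 <= a) by (unfold a; lra).
  assert (E : forall k, ELB L D k = gg a (2 * Rpower (INR D) (k - 1/2))) by reflexivity.
  assert (Tpos : forall k, 0 < 2 * Rpower (INR D) (k - 1/2)).
  { intro k. unfold Rpower. assert (H := exp_pos ((k - 1/2) * ln (INR D))). lra. }
  split.
  - intros k1 k2 hk. rewrite !E.
    assert (Hm : Rpower (INR D) (k1 - 1/2) <= Rpower (INR D) (k2 - 1/2))
      by (apply Rle_Rpower; lra).
    destruct (Rle_lt_or_eq_dec _ _ Hm) as [Hlt|Heq].
    + left. apply gg_decr; auto. specialize (Tpos k1); lra. lra.
    + rewrite Heq. lra.
  - intro k. rewrite E. set (t := 2 * Rpower (INR D) (k - 1/2)).
    assert (ht : 0 < t) by apply Tpos.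
    split.
    + unfold gg. assert (He := exp_pos t).
      assert (t <= ln (a + exp t)).
      { rewrite <- (ln_exp t) at 1. apply ln_le; lra. }
      assert (t * exp t / (a + exp t) <= t).
      { apply Rmult_le_reg_r with (a + exp t). lra.
        unfold Rdiv. rewrite Rmult_assoc, Rinv_l by lra. nra. }
      lra.
    + assert (H := gg_decr a 0 t ha (Rle_refl 0) ht).
      unfold gg at 2 in H. rewrite exp_0 in H.
      replace (a + 1) with (INR L) in H by (unfold a; ring). lra.
Qed.
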